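(* Let $\mathcal{DP}^*_1$ be the digraph with vertex set $\{1,2\}$ and edge set $\{(1,1),(1,2),(2,2)\}$. Then $\Pi_2\text{-}\mathrm{CSP}((\mathcal{DP}^*_1)^\omega) \subseteq \Pi_2\text{-}\mathrm{CSP}(\mathbb{N};\leq)$, where the edge relation and $\leq$ interpret the same binary relation symbol.
   Context: $(\mathcal{DP}^*_1)^\omega$ is the direct power of countably many copies of $\mathcal{DP}^*_1$ (edges holding coordinatewise). $\Pi_2\text{-}\mathrm{CSP}(\mathcal{A})$ is the set of sentences of the form $\forall\bar x\exists\bar y\,P$, with $P$ a conjunction of atoms (relational atoms and equalities), true in $\mathcal{A}$. *)

(* Defs.v *)
From mathcomp Require Import all_boot.
Set Implicit Arguments. Unset Strict Implicit. Unset Printing Implicit Defensive.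

Record digraph := Digraph { carrier : Type; edge : carrier -> carrier -> Prop }.
Arguments Digraph {carrier} edge.

Inductive atom (k : nat) :=
| AEdge of 'I_k & 'I_k
| AEq of 'I_k & 'I_k.

(* A Pi_2 sentence  forall x_1..x_n exists y_1..y_m, P  where P is a finite
   conjunction (list) of atoms over the n+m variables; variable v : 'I_(n+m)
   is x_v if v < n and y_(v-n) otherwise. *)
Record pi2_sentence := Pi2 {
  nU : nat;
  nE : nat;
  matrix : seq (atom (nU + nE))
}.

Definition atom_holds (A : digraph) k (val : 'I_k -> carrier A) (a : atom k) : Prop :=
  match a with
  | AEdge u v => @edge A (val u) (val v)
  | AEq u v => val u = val v
  end.

Definition join_val (T : Type) n m (xs : 'I_n -> T) (ys : 'I_m -> T)
  (v : 'I_(n + m)) : T :=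
  match split v with inl i => xs i | inr j => ys j end.

Definition holds (A : digraph) (phi : pi2_sentence) : Prop :=
  forall xs : 'I_(nU phi) -> carrier A,
  exists ys : 'I_(nE phi) -> carrier A,
  foldr (fun a P => @atom_holds A _ (join_val xs ys) a /\ P) True (matrix phi).

Definition Pi2CSP (A : digraph) : pi2_sentence -> Prop := fun phi => holds A phi.

(* DP*_1 : vertex set {1,2} coded as bool (false = 1, true = 2),
   edges (1,1),(1,2),(2,2): all pairs except (2,1). *)
Definition DP1_edge (a b : bool) : Prop := ~ (a = true /\ b = false).
Definition DP1 : digraph := Digraph DP1_edge.

Definition DP1_omega : digraph :=
  Digraph (fun f g : nat -> bool => forall i, DP1_edge (f i) (g i)).

Definition Nle : digraph := Digraph (fun a b : nat => a <= b).

(* Main.v *)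
Require Import Defs.
From mathcomp Require Import all_boot.
From mathcomp Require Import zify.

Fixpoint hcount (M : nat) (S : nat -> bool) : nat :=
  match M with 0 => 0 | M'.+1 => hcount M' S + S M' end.

Definition emb (n : nat) : nat -> bool := fun i => i < n.

Lemma hcount_mono M (S T : nat -> bool) :
  (forall i, DP1_edge (S i) (T i)) -> hcount M S <= hcount M T.
Proof.
move=> H; elim: M => [|M IH] //=; apply: leq_add => //.
move: (H M); rewrite /DP1_edge; case: (S M); case: (T M) => //= K.
by exfalso; apply: K.
Qed.

Lemma hcount_emb M n : hcount M (emb n) = minn M n.
Proof.
elim: M => [|M IH] /=; first by rewrite min0n.
rewrite IH /emb; case: (ltnP M n) => /= H; lia.
Qed.

Lemma transfer k (f : 'I_k -> nat -> bool) (g : 'I_k -> nat) M (l : seq (atom k)) :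
  (forall v, hcount M (f v) = g v) ->
  foldr (fun a P => @atom_holds DP1_omega _ f a /\ P) True l ->
  foldr (fun a P => @atom_holds Nle _ g a /\ P) True l.
Proof.
move=> key; elim: l => [|a l IH] //= [Ha Hs]; split; last exact: IH.
case: a Ha => u v /=.
- by rewrite -!key; apply: hcount_mono.
- by rewrite -!key => ->.
Qed.

Theorem mainTheorem8 :
  forall phi : pi2_sentence, Pi2CSP DP1_omega phi -> Pi2CSP Nle phi.
Proof.
move=> phi H xs.
set M := \max_(i < nU phi) xs i.
have [ys Hys] := H (fun i => emb (xs i)).
exists (fun j => hcount M (ys j)).
have key : forall v, hcount M (join_val (fun i => emb (xs i)) ys v)
                     = join_val xs (fun j => hcount M (ys j)) v.
  move=> v; rewrite /join_val; case: (split v) => [i|j] //.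
  rewrite hcount_emb; apply/minn_idPr; exact: (leq_bigmax i).
exact: (@transfer _ _ _ M (matrix phi) key Hys).
Qed.
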